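(* Let $\alpha\in\mathbb{C}$ with $\Re(\alpha)>-1/2$. Then for every $n\in\mathbb{N}_0$ the function $p_n(x;\alpha)$ is a polynomial in $x$ of exactly degree $n$. Moreover, for all $n\in\mathbb{N}_0$: (i) $p_{n+1}(x;\alpha)= x^2 p_n''(x;\alpha)-x(2x-1-2\alpha)p_n'(x;\alpha)-\big((2\alpha+1)x-\alpha^2\big)p_n(x;\alpha)$, where primes denote derivatives in $x$; (ii) $(2\alpha+1)\,x\,p_n(x;\alpha+1)=-p_{n+1}(x;\alpha)+\alpha^2 p_n(x;\alpha)$; (iii) $p_n(0;\alpha)=\alpha^{2n}$; (iv) $p_n(x;\alpha)=(-2)^n(\alpha+1/2)_n\,x^n+a_{n-1}(x)$ for some polynomial $a_{n-1}$ of degree at most $n-1$ (with $a_{-1}=0$).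
   Context: Let $\mathcal{A}$ be the Bessel-type differential operator acting on (analytic) functions of $x>0$ by $\mathcal{A}f(x)=-x^2f''(x)-xf'(x)+x^2f(x)$, and let $\mathcal{A}^n$ denote its $n$-th iterate ($\mathcal{A}^0$ = identity). For $\alpha\in\mathbb{C}$ and $n\in\mathbb{N}_0$ define, for $x>0$, $p_n(x;\alpha)=(-1)^n e^{x}x^{-\alpha}\,\mathcal{A}^n\big(e^{-x}x^{\alpha}\big)$. The Pochhammer symbol is $(y)_0=1$, $(y)_n=\prod_{j=0}^{n-1}(y+j)$ for $n\ge1$. *)

(* Defs.v *)
From Stdlib Require Import Reals List ClassicalEpsilon.
Open Scope R_scope.

Definition Cplx : Type := (R * R)%type.
Definition RtoC (r : R) : Cplx := (r, 0).
Definition Czero : Cplx := RtoC 0.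
Definition Cone : Cplx := RtoC 1.
Definition Cadd (z w : Cplx) : Cplx := (fst z + fst w, snd z + snd w).
Definition Copp (z : Cplx) : Cplx := (- fst z, - snd z).
Definition Csub (z w : Cplx) : Cplx := Cadd z (Copp w).
Definition Cmul (z w : Cplx) : Cplx :=
  (fst z * fst w - snd z * snd w, fst z * snd w + snd z * fst w).
Fixpoint Cpow (z : Cplx) (n : nat) : Cplx :=
  match n with O => Cone | S k => Cmul z (Cpow z k) end.

(* principal power x^a = exp(a ln x) for real x > 0 and complex a *)
Definition Cpowr (x : R) (a : Cplx) : Cplx :=
  let m := exp (fst a * ln x) in (m * cos (snd a * ln x), m * sin (snd a * ln x)).

(* rderiv g x = g'(x) whenever g is differentiable at x (junk 0 otherwise) *)
Definition rderiv (g : R -> R) (x : R) : R :=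
  match excluded_middle_informative (exists l, derivable_pt_lim g x l) with
  | left H => proj1_sig (constructive_indefinite_description _ H)
  | right _ => 0
  end.
Definition Cderiv (f : R -> Cplx) (x : R) : Cplx :=
  (rderiv (fun t => fst (f t)) x, rderiv (fun t => snd (f t)) x).

Definition Aop (f : R -> Cplx) : R -> Cplx := fun x =>
  Cadd (Cadd (Copp (Cmul (RtoC (x ^ 2)) (Cderiv (Cderiv f) x)))
             (Copp (Cmul (RtoC x) (Cderiv f x))))
       (Cmul (RtoC (x ^ 2)) (f x)).

Definition Aiter (n : nat) (f : R -> Cplx) : R -> Cplx := Nat.iter n Aop f.

(* p_n(x; alpha) = (-1)^n e^x x^{-alpha} A^n (e^{-x} x^alpha), meaningful for x > 0 *)
Definition pn (n : nat) (alpha : Cplx) (x : R) : Cplx :=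
  Cmul (RtoC ((-1) ^ n * exp x))
    (Cmul (Cpowr x (Copp alpha))
       (Aiter n (fun y => Cmul (RtoC (exp (- y))) (Cpowr y alpha)) x)).

Fixpoint poch (y : Cplx) (n : nat) : Cplx :=
  match n with O => Cone | S k => Cmul (poch y k) (Cadd y (RtoC (INR k))) end.

(* ---------- polynomials: little-endian coefficient lists ---------- *)
Definition Peval (P : list Cplx) (z : Cplx) : Cplx :=
  fold_right (fun c acc => Cadd c (Cmul z acc)) Czero P.
Definition Pdeg_exact (P : list Cplx) (n : nat) : Prop :=
  length P = S n /\ last P Czero <> Czero.

(* Main.v *)
Require Import Defs.
From Stdlib Require Import Reals List.
From Stdlib Require Import Lra Lia ClassicalEpsilon FunctionalExtensionality.
Open Scope R_scope.
Import ListNotations.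

Lemma Ceq (z w : Cplx) : fst z = fst w -> snd z = snd w -> z = w.
Proof. destruct z, w; simpl; intros; subst; reflexivity. Qed.

Arguments Peval : simpl never.
Arguments Cpowr : simpl never.

Ltac cr := apply Ceq; simpl; ring.

Fixpoint Padd (A B : list Cplx) : list Cplx :=
  match A, B with
  | [], _ => B
  | _, [] => A
  | a :: A', b :: B' => Cadd a b :: Padd A' B'
  end.
Fixpoint Pder (P : list Cplx) : list Cplx :=
  match P with [] => [] | c :: Q => Padd Q (Czero :: Pder Q) end.
Fixpoint Tl (a : Cplx) (P : list Cplx) : list Cplx :=
  match P with
  | [] => []
  | c :: Q => Padd [Cmul c (Cmul a a); Cmul c (Copp (Cadd (Cmul (RtoC 2) a) Cone))]
                   (Czero :: Tl (Cadd a Cone) Q)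
  end.

Lemma Peval_nil z : Peval [] z = Czero.
Proof. reflexivity. Qed.
Lemma Peval_cons c Q z : Peval (c :: Q) z = Cadd c (Cmul z (Peval Q z)).
Proof. reflexivity. Qed.

Lemma Peval_Padd A B z : Peval (Padd A B) z = Cadd (Peval A z) (Peval B z).
Proof.
  revert B; induction A as [|a A IH]; intros [|b B]; simpl Padd;
  rewrite ?Peval_nil, ?Peval_cons, ?IH; try cr.
Qed.

Lemma Pder_Padd A B z :
  Peval (Pder (Padd A B)) z = Cadd (Peval (Pder A) z) (Peval (Pder B) z).
Proof.
  revert B; induction A as [|a A IH]; intros [|b B]; simpl Padd; simpl Pder;
  rewrite ?Peval_nil, ?Peval_Padd, ?Peval_cons, ?IH; try cr.
Qed.

Lemma Pder_cons c Q z :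
  Peval (Pder (c :: Q)) z = Cadd (Peval Q z) (Cmul z (Peval (Pder Q) z)).
Proof. simpl Pder. rewrite Peval_Padd, Peval_cons. cr. Qed.

Lemma Tl_cons a c Q : Tl a (c :: Q) = Padd [Cmul c (Cmul a a); Cmul c (Copp (Cadd (Cmul (RtoC 2) a) Cone))]
                   (Czero :: Tl (Cadd a Cone) Q).
Proof. reflexivity. Qed.
Lemma Pder_cons_def c Q : Pder (c :: Q) = Padd Q (Czero :: Pder Q).
Proof. reflexivity. Qed.

Lemma TlE P : forall a z, Peval (Tl a P) z =
  Csub (Csub (Cmul (Cmul z z) (Peval (Pder (Pder P)) z))
             (Cmul (Cmul z (Csub (Csub (Cmul (RtoC 2) z) Cone) (Cmul (RtoC 2) a)))
                   (Peval (Pder P) z)))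
       (Cmul (Csub (Cmul (Cadd (Cmul (RtoC 2) a) Cone) z) (Cmul a a)) (Peval P z)).
Proof.
  induction P as [|c Q IH]; intros a z.
  - simpl. rewrite !Peval_nil. cr.
  - rewrite Tl_cons, Peval_Padd, !Peval_cons, IH.
    rewrite (Pder_cons c Q). rewrite (Pder_cons_def c Q), Pder_Padd, Pder_cons.
    rewrite ?Peval_cons, ?Peval_nil. cr.
Qed.

Lemma length_Padd A B : length (Padd A B) = Nat.max (length A) (length B).
Proof.
  revert B; induction A as [|a A IH]; intros [|b B]; simpl; auto.
Qed.

Lemma length_Tl P : forall a, P <> [] -> length (Tl a P) = S (length P).
Proof.
  induction P as [|c Q IH]; intros a H; [congruence|].
  rewrite Tl_cons, length_Padd. destruct Q as [|d Q'].
  - reflexivity.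
  - change (Nat.max 2 (S (length (Tl (Cadd a Cone) (d :: Q')))) = S (length (c :: d :: Q'))).
    rewrite IH by discriminate. simpl length. lia.
Qed.

Lemma last_cons2 (x : Cplx) L d : L <> [] -> last (x :: L) d = last L d.
Proof. destruct L; [congruence|reflexivity]. Qed.

Lemma last_Padd A : forall B d, (length A < length B)%nat -> last (Padd A B) d = last B d.
Proof.
  induction A as [|a A IH]; intros [|b B] d H; simpl in H; try lia; [reflexivity|].
  assert (HB : B <> []) by (destruct B; simpl in H; [lia|discriminate]).
  change (last (Cadd a b :: Padd A B) d = last (b :: B) d).
  assert (HP : Padd A B <> []).
  { intro E; apply (f_equal (@length _)) in E; rewrite length_Padd in E.
    destruct B; simpl in *; [congruence|lia]. }
  rewrite (last_cons2 _ (Padd A B)) by exact HP.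
  rewrite (last_cons2 _ B) by exact HB.
  apply IH; lia.
Qed.

Lemma last_Tl m : forall P a, length P = S m ->
  last (Tl a P) Czero =
  Cmul (Copp (Cadd (Cmul (RtoC 2) a) (RtoC (2 * INR m + 1)))) (last P Czero).
Proof.
  induction m as [|m IH]; intros P a HP.
  - destruct P as [|c [|d Q]]; simpl in HP; try lia.
    rewrite Tl_cons. simpl. cr.
  - destruct P as [|c Q]; simpl in HP; [lia|]. injection HP as HQ.
    assert (HQn : Q <> []) by (destruct Q; simpl in HQ; [lia|discriminate]).
    rewrite Tl_cons, last_Padd.
    2:{ simpl length. rewrite length_Tl by auto. lia. }
    rewrite last_cons2 by (intro E; apply (f_equal (@length _)) in E;
        rewrite length_Tl in E by auto; discriminate).
    rewrite (IH Q) by auto. rewrite (last_cons2 c Q) by auto.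
    rewrite S_INR. cr.
Qed.

Definition Pn (a : Cplx) (n : nat) : list Cplx := Nat.iter n (Tl a) [Cone].

Lemma Pn_S a n : Pn a (S n) = Tl a (Pn a n).
Proof. reflexivity. Qed.

Lemma length_Pn a n : length (Pn a n) = S n.
Proof.
  induction n; [reflexivity|]. rewrite Pn_S, length_Tl, IHn; auto.
  intro E; rewrite E in IHn; discriminate.
Qed.

Lemma last_Pn a n : last (Pn a n) Czero =
  Cmul (Cpow (RtoC (-2)) n) (poch (Cadd a (RtoC (1/2))) n).
Proof.
  induction n; [cr|].
  rewrite Pn_S, (last_Tl n) by apply length_Pn. rewrite IHn.
  simpl Cpow; simpl poch.
  generalize (Cpow (RtoC (-2)) n) (poch (Cadd a (RtoC (1 / 2))) n); intros u v.
  apply Ceq; simpl; field.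
Qed.

Lemma Pn_zero a n : Peval (Pn a n) Czero = Cpow a (2 * n).
Proof.
  induction n; [cr|].
  rewrite Pn_S, TlE, IHn. replace (2 * S n)%nat with (S (S (2 * n))) by lia.
  simpl Cpow. generalize (Cpow a (2*n)). intros u.
  unfold Czero. cr.
Qed.

Lemma Peval_app l c z : Peval (l ++ [c]) z = Cadd (Peval l z) (Cmul c (Cpow z (length l))).
Proof.
  induction l as [|x l IH]; simpl app; rewrite ?Peval_cons, ?Peval_nil.
  - simpl; cr.
  - rewrite IH. simpl length. simpl Cpow. cr.
Qed.

Definition Cn2 (z : Cplx) := fst z * fst z + snd z * snd z.
Lemma Cn2_mul z w : Cn2 (Cmul z w) = Cn2 z * Cn2 w.
Proof. unfold Cn2; simpl; ring. Qed.
Lemma Cn2_pos z : z <> Czero -> 0 < Cn2 z.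
Proof.
  intro H; unfold Cn2. destruct z as [x y]; simpl.
  destruct (Req_dec x 0); destruct (Req_dec y 0); subst.
  - exfalso; apply H; reflexivity.
  - nra.
  - nra.
  - nra.
Qed.
Lemma Cmul_neq0 z w : z <> Czero -> w <> Czero -> Cmul z w <> Czero.
Proof.
  intros Hz Hw E. pose proof (Cn2_pos _ Hz). pose proof (Cn2_pos _ Hw).
  assert (Cn2 (Cmul z w) = 0) by (rewrite E; unfold Cn2; simpl; ring).
  rewrite Cn2_mul in H1. nra.
Qed.
Lemma fst_neq0 z : fst z <> 0 -> z <> Czero.
Proof. intros H E; rewrite E in H; simpl in H; lra. Qed.

Lemma Cpow_neq0 z n : z <> Czero -> Cpow z n <> Czero.
Proof.
  intro H; induction n; simpl.
  - apply fst_neq0; simpl; lra.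
  - apply Cmul_neq0; auto.
Qed.
Lemma poch_neq0 y n : 0 < fst y -> poch y n <> Czero.
Proof.
  intro H; induction n; simpl.
  - apply fst_neq0; simpl; lra.
  - apply Cmul_neq0; auto. apply fst_neq0; simpl. pose proof (pos_INR n). lra.
Qed.

Definition CD (f : R -> Cplx) (x : R) (l : Cplx) : Prop :=
  derivable_pt_lim (fun t => fst (f t)) x (fst l) /\
  derivable_pt_lim (fun t => snd (f t)) x (snd l).

Lemma rderiv_spec g x l : derivable_pt_lim g x l -> rderiv g x = l.
Proof.
  intro H. unfold rderiv. destruct excluded_middle_informative as [E|E].
  - destruct constructive_indefinite_description as [l' Hl']. simpl.
    eapply uniqueness_limite; eauto.
  - exfalso; apply E; eauto.
Qed.

Lemma dl_local f g x l : (forall y, 0 < y -> f y = g y) -> 0 < x ->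
  derivable_pt_lim f x l -> derivable_pt_lim g x l.
Proof.
  intros Hfg Hx H eps Heps. destruct (H eps Heps) as [d Hd].
  assert (Hm : 0 < Rmin d (x/2)) by (apply Rmin_glb_lt; [apply cond_pos|lra]).
  exists (mkposreal _ Hm). intros h Hh Hlt. simpl in Hlt.
  assert (H1 : Rabs h < d) by (eapply Rlt_le_trans; [exact Hlt|apply Rmin_l]).
  assert (H2 : Rabs h < x/2) by (eapply Rlt_le_trans; [exact Hlt|apply Rmin_r]).
  rewrite <- !Hfg.
  - apply Hd; auto.
  - exact Hx.
  - apply Rabs_def2 in H2. lra.
Qed.

Lemma rderiv_local f g x : (forall y, 0 < y -> f y = g y) -> 0 < x ->
  rderiv f x = rderiv g x.
Proof.
  intros Hfg Hx. unfold rderiv at 1.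
  destruct excluded_middle_informative as [E|E].
  - destruct constructive_indefinite_description as [l Hl]; simpl.
    symmetry; apply rderiv_spec. eapply dl_local; eauto.
  - unfold rderiv. destruct excluded_middle_informative as [E'|E']; [|reflexivity].
    exfalso; apply E. destruct E' as [l Hl]. exists l.
    eapply dl_local; [|exact Hx|exact Hl]. intros; symmetry; auto.
Qed.

Lemma Cderiv_local f g x : (forall y, 0 < y -> f y = g y) -> 0 < x ->
  Cderiv f x = Cderiv g x.
Proof.
  intros H Hx. unfold Cderiv. f_equal; apply rderiv_local; auto;
  intros y Hy; rewrite H; auto.
Qed.

Lemma Cderiv_CD f x l : CD f x l -> Cderiv f x = l.
Proof.
  intros [H1 H2]. unfold Cderiv. rewrite (rderiv_spec _ _ _ H1), (rderiv_spec _ _ _ H2).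
  destruct l; reflexivity.
Qed.

Lemma CD_ext f g x l l' : (forall t, f t = g t) -> l = l' -> CD f x l -> CD g x l'.
Proof.
  intros H E HD; subst l'. replace g with f; auto. extensionality t; auto.
Qed.

Lemma CD_const c x : CD (fun _ => c) x Czero.
Proof. split; simpl; apply (derivable_pt_lim_const _ x). Qed.

Lemma CD_RtoC h x l : derivable_pt_lim h x l -> CD (fun t => RtoC (h t)) x (RtoC l).
Proof. intro H; split; simpl; [exact H|apply (derivable_pt_lim_const 0 x)]. Qed.

Lemma CD_id x : CD (fun t => RtoC t) x Cone.
Proof. apply CD_RtoC, derivable_pt_lim_id. Qed.

Lemma CD_add f g x a b : CD f x a -> CD g x b ->
  CD (fun t => Cadd (f t) (g t)) x (Cadd a b).
Proof.
  intros [Hf1 Hf2] [Hg1 Hg2]; split; simpl.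
  - exact (derivable_pt_lim_plus _ _ _ _ _ Hf1 Hg1).
  - exact (derivable_pt_lim_plus _ _ _ _ _ Hf2 Hg2).
Qed.

Lemma CD_mul f g x a b : CD f x a -> CD g x b ->
  CD (fun t => Cmul (f t) (g t)) x (Cadd (Cmul a (g x)) (Cmul (f x) b)).
Proof.
  intros [Hf1 Hf2] [Hg1 Hg2]; split; simpl.
  - pose proof (derivable_pt_lim_minus _ _ _ _ _
      (derivable_pt_lim_mult _ _ _ _ _ Hf1 Hg1) (derivable_pt_lim_mult _ _ _ _ _ Hf2 Hg2)) as K.
    unfold minus_fct, mult_fct in K.
    replace (fst a * fst (g x) - snd a * snd (g x) + (fst (f x) * fst b - snd (f x) * snd b))
      with (fst a * fst (g x) + fst (f x) * fst b - (snd a * snd (g x) + snd (f x) * snd b)) by ring.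
    exact K.
  - pose proof (derivable_pt_lim_plus _ _ _ _ _
      (derivable_pt_lim_mult _ _ _ _ _ Hf1 Hg2) (derivable_pt_lim_mult _ _ _ _ _ Hf2 Hg1)) as K.
    unfold plus_fct, mult_fct in K.
    replace (fst a * snd (g x) + snd a * fst (g x) + (fst (f x) * snd b + snd (f x) * fst b))
      with (fst a * snd (g x) + fst (f x) * snd b + (snd a * fst (g x) + snd (f x) * fst b)) by ring.
    exact K.
Qed.

Definition PeR (P : list Cplx) (t : R) : Cplx := Peval P (RtoC t).

Lemma CD_peval P x : CD (PeR P) x (PeR (Pder P) x).
Proof.
  induction P as [|c Q IH].
  - unfold PeR; simpl Pder. eapply CD_ext; [|reflexivity|apply (CD_const Czero)].
    intro; reflexivity.
  - eapply CD_ext; [| |apply (CD_add _ _ _ _ _ (CD_const c x) (CD_mul _ _ _ _ _ (CD_id x) IH))].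
    + intro t; unfold PeR; rewrite Peval_cons; reflexivity.
    + unfold PeR; rewrite Pder_cons. cr.
Qed.

Lemma Cderiv_peval P x : Cderiv (PeR P) x = PeR (Pder P) x.
Proof. apply Cderiv_CD, CD_peval. Qed.

Lemma dl_comp_ln g gv c y : 0 < y -> derivable_pt_lim g (c * ln y) gv ->
  derivable_pt_lim (fun t => g (c * ln t)) y (gv * (c * / y)).
Proof.
  intros Hy H.
  exact (derivable_pt_lim_comp (fun t => c * ln t) g y (c * / y) gv
          (derivable_pt_lim_scal ln c y (/ y) (derivable_pt_lim_ln y Hy)) H).
Qed.

Lemma CD_cpowr a y : 0 < y ->
  CD (fun t => Cpowr t a) y (Cmul (Cmul a (RtoC (/ y))) (Cpowr y a)).
Proof.
  intro Hy. unfold Cpowr. split; simpl.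
  - pose proof (derivable_pt_lim_mult _ _ _ _ _
      (dl_comp_ln exp _ (fst a) y Hy (derivable_pt_lim_exp _))
      (dl_comp_ln cos _ (snd a) y Hy (derivable_pt_lim_cos _))) as K.
    unfold mult_fct in K.
    match goal with |- derivable_pt_lim _ _ ?l => replace l with
      (exp (fst a * ln y) * (fst a * / y) * cos (snd a * ln y) +
       exp (fst a * ln y) * (- sin (snd a * ln y) * (snd a * / y))) by ring end.
    exact K.
  - pose proof (derivable_pt_lim_mult _ _ _ _ _
      (dl_comp_ln exp _ (fst a) y Hy (derivable_pt_lim_exp _))
      (dl_comp_ln sin _ (snd a) y Hy (derivable_pt_lim_sin _))) as K.
    unfold mult_fct in K.
    match goal with |- derivable_pt_lim _ _ ?l => replace l with
      (exp (fst a * ln y) * (fst a * / y) * sin (snd a * ln y) +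
       exp (fst a * ln y) * (cos (snd a * ln y) * (snd a * / y))) by ring end.
    exact K.
Qed.

Lemma dl_expopp y : derivable_pt_lim (fun t => exp (- t)) y (- exp (- y)).
Proof.
  pose proof (derivable_pt_lim_comp (fun t => - t) exp y (-1) (exp (- y))
     (derivable_pt_lim_opp id y 1 (derivable_pt_lim_id y)) (derivable_pt_lim_exp _)) as K.
  replace (- exp (- y)) with (exp (- y) * -1) by ring. exact K.
Qed.

Lemma dl_inv y : 0 < y -> derivable_pt_lim (fun t => / t) y (- / (y * y)).
Proof.
  intro Hy.
  pose proof (derivable_pt_lim_comp (fun t => -1 * ln t) exp y (-1 * / y) (exp (-1 * ln y))
     (derivable_pt_lim_scal ln (-1) y (/ y) (derivable_pt_lim_ln y Hy))
     (derivable_pt_lim_exp _)) as K.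
  assert (E : forall t, 0 < t -> exp (-1 * ln t) = / t).
  { intros t Ht. replace (-1 * ln t) with (- ln t) by ring.
    rewrite exp_Ropp, exp_ln; auto. }
  eapply dl_local; [exact E|exact Hy|].
  rewrite E in K by auto. replace (- / (y * y)) with (/ y * (-1 * / y)) by (field; lra).
  exact K.
Qed.

Section W.
Variable a : Cplx.
Definition w (t : R) : Cplx := Cmul (RtoC (exp (- t))) (Cpowr t a).
Definition K (t : R) : Cplx := Csub (Cmul a (RtoC (/ t))) Cone.
Definition K' (t : R) : Cplx := Cmul a (RtoC (- / (t * t))).

Lemma CD_w y : 0 < y -> CD w y (Cmul (w y) (K y)).
Proof.
  intro Hy. eapply CD_ext; [intro; reflexivity| |
    apply (CD_mul _ _ _ _ _ (CD_RtoC _ _ _ (dl_expopp y)) (CD_cpowr a y Hy))].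
  unfold w, K. generalize (Cpowr y a). intro c. cr.
Qed.

Lemma CD_K y : 0 < y -> CD K y (K' y).
Proof.
  intro Hy. unfold K.
  eapply CD_ext; [intro; reflexivity| |
    apply (CD_add _ _ _ _ _ (CD_mul _ _ _ _ _ (CD_const a y) (CD_RtoC _ _ _ (dl_inv y Hy)))
       (CD_const (Copp Cone) y))].
  unfold K'. cr.
Qed.

Lemma CD_wH H H' y : 0 < y -> CD H y (H' y) ->
  CD (fun t => Cmul (w t) (H t)) y (Cmul (w y) (Cadd (Cmul (K y) (H y)) (H' y))).
Proof.
  intros Hy HH.
  eapply CD_ext; [intro; reflexivity| | apply (CD_mul _ _ _ _ _ (CD_w y Hy) HH)].
  generalize (w y) (K y) (H y) (H' y). intros. cr.
Qed.
End W.

Lemma Aop_local F G x : (forall y, 0 < y -> F y = G y) -> 0 < x -> Aop F x = Aop G x.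
Proof.
  intros H Hx. unfold Aop.
  rewrite (H x Hx), (Cderiv_local F G x H Hx).
  rewrite (Cderiv_local (Cderiv F) (Cderiv G) x); auto.
  intros y Hy; apply Cderiv_local; auto.
Qed.

Lemma Aop_step a c P x : 0 < x ->
  Aop (fun t => Cmul c (Cmul (w a t) (PeR P t))) x =
  Cmul (Copp c) (Cmul (w a x) (PeR (Tl a P) x)).
Proof.
  intro Hx.
  set (H0 := fun t => Cmul c (PeR P t)).
  set (H0' := fun t => Cmul c (PeR (Pder P) t)).
  assert (D0 : forall y, CD H0 y (H0' y)).
  { intro y. eapply CD_ext; [intro; reflexivity| |
      apply (CD_mul _ _ _ _ _ (CD_const c y) (CD_peval P y))].
    unfold H0'. generalize (PeR P y) (PeR (Pder P) y); intros; cr. }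
  set (H1 := fun t => Cadd (Cmul (K a t) (H0 t)) (H0' t)).
  set (H1' := fun t => Cadd (Cadd (Cmul (K' a t) (H0 t)) (Cmul (K a t) (H0' t)))
                            (Cmul c (PeR (Pder (Pder P)) t))).
  assert (D1 : forall y, 0 < y -> CD H1 y (H1' y)).
  { intros y Hy. eapply CD_ext; [intro; reflexivity| |
      apply (CD_add _ _ _ _ _ (CD_mul _ _ _ _ _ (CD_K a y Hy) (D0 y))
              (CD_mul _ _ _ _ _ (CD_const c y) (CD_peval (Pder P) y)))].
    unfold H1'. generalize (K' a y) (H0 y) (K a y) (H0' y) (PeR (Pder (Pder P)) y).
    intros; cr. }
  assert (E0 : forall y, Cmul c (Cmul (w a y) (PeR P y)) = Cmul (w a y) (H0 y)).
  { intro y; unfold H0. generalize (w a y) (PeR P y); intros; cr. }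
  assert (E1 : forall y, 0 < y ->
     Cderiv (fun t => Cmul c (Cmul (w a t) (PeR P t))) y = Cmul (w a y) (H1 y)).
  { intros y Hy. apply Cderiv_CD. eapply CD_ext; [intro t; symmetry; apply E0|reflexivity|].
    apply CD_wH; auto. }
  assert (E2 : Cderiv (Cderiv (fun t => Cmul c (Cmul (w a t) (PeR P t)))) x =
               Cmul (w a x) (Cadd (Cmul (K a x) (H1 x)) (H1' x))).
  { rewrite (Cderiv_local _ (fun t => Cmul (w a t) (H1 t)) x E1 Hx).
    apply Cderiv_CD, CD_wH; auto. }
  unfold Aop. rewrite E2, (E1 x Hx).
  unfold H1', H1, H0', H0, K', K. unfold PeR. rewrite TlE.
  generalize (w a x) (Peval P (RtoC x)) (Peval (Pder P) (RtoC x)) (Peval (Pder (Pder P)) (RtoC x)). intros.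
  apply Ceq; simpl; field; lra.
Qed.

Lemma Aiter_eq a n : forall y, 0 < y ->
  Aiter n (w a) y = Cmul (RtoC ((-1) ^ n)) (Cmul (w a y) (PeR (Pn a n) y)).
Proof.
  induction n; intros y Hy.
  - simpl. unfold PeR. rewrite Peval_cons, Peval_nil. generalize (w a y). intros; cr.
  - change (Aiter (S n) (w a) y) with (Aop (Aiter n (w a)) y).
    rewrite (Aop_local _ _ y IHn Hy), Aop_step by auto. rewrite Pn_S.
    generalize (w a y) (PeR (Tl a (Pn a n)) y). intros. apply Ceq; simpl; ring.
Qed.

Lemma Cpowr_inv x a : Cmul (Cpowr x (Copp a)) (Cpowr x a) = Cone.
Proof.
  unfold Cpowr. simpl.
  replace (- fst a * ln x) with (- (fst a * ln x)) by ring.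
  replace (- snd a * ln x) with (- (snd a * ln x)) by ring.
  rewrite exp_Ropp, cos_neg, sin_neg.
  pose proof (exp_pos (fst a * ln x)). pose proof (sin2_cos2 (snd a * ln x)).
  unfold Rsqr in *. apply Ceq; simpl; field_simplify; try lra; nra.
Qed.

Lemma sq_m1 n : (-1) ^ n * (-1) ^ n = 1.
Proof. induction n; simpl; [ring|]. rewrite <- IHn; ring. Qed.

Lemma pn_eq a n x : 0 < x -> pn n a x = PeR (Pn a n) x.
Proof.
  intro Hx. unfold pn. change (fun y => Cmul (RtoC (exp (- y))) (Cpowr y a)) with (w a).
  rewrite Aiter_eq by auto. unfold w.
  assert (E1 : exp x * exp (- x) = 1) by (rewrite <- exp_plus; replace (x + - x) with 0 by ring; apply exp_0).
  pose proof (sq_m1 n) as E2.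
  pose proof (Cpowr_inv x a) as E3.
  revert E1 E2 E3. generalize (exp x) (exp (-x)) ((-1)^n) (Cpowr x (Copp a)) (Cpowr x a) (PeR (Pn a n) x).
  intros r r0 r1 c c0 c1 E1 E2 E3.
  transitivity (Cmul (RtoC ((r1*r1)*(r*r0))) (Cmul (Cmul c c0) c1)); [cr|].
  rewrite E3, E1, E2. cr.
Qed.

Definition Pscale (c : Cplx) (P : list Cplx) : list Cplx := map (Cmul c) P.

Lemma Peval_scale c P z : Peval (Pscale c P) z = Cmul c (Peval P z).
Proof.
  induction P as [|d Q IH]; unfold Pscale in *; simpl map; rewrite ?Peval_cons, ?Peval_nil, ?IH; cr.
Qed.

Lemma Pscale_Padd c A B : Pscale c (Padd A B) = Padd (Pscale c A) (Pscale c B).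
Proof.
  revert B; induction A as [|a A IH]; intros [|b B]; try reflexivity.
  simpl. f_equal; [cr|]. apply IH.
Qed.

Lemma Pder_scale c P : Pder (Pscale c P) = Pscale c (Pder P).
Proof.
  induction P as [|d Q IH]; [reflexivity|].
  change (Padd (Pscale c Q) (Czero :: Pder (Pscale c Q)) = Pscale c (Padd Q (Czero :: Pder Q))).
  rewrite Pscale_Padd, IH. f_equal. unfold Pscale. simpl map. f_equal. cr.
Qed.

Lemma Pder_resp A B : (forall t, PeR A t = PeR B t) -> forall x, PeR (Pder A) x = PeR (Pder B) x.
Proof.
  intros H x. rewrite <- !Cderiv_peval. f_equal. extensionality t. apply H.
Qed.

Lemma TlR a P x : PeR (Tl a P) x =
  Csub (Csub (Cmul (Cmul (RtoC x) (RtoC x)) (PeR (Pder (Pder P)) x))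
             (Cmul (Cmul (RtoC x) (Csub (Csub (Cmul (RtoC 2) (RtoC x)) Cone) (Cmul (RtoC 2) a)))
                   (PeR (Pder P) x)))
       (Cmul (Csub (Cmul (Cadd (Cmul (RtoC 2) a) Cone) (RtoC x)) (Cmul a a)) (PeR P x)).
Proof. unfold PeR; apply TlE. Qed.

Lemma Tl_resp a A B : (forall t, PeR A t = PeR B t) -> forall x, PeR (Tl a A) x = PeR (Tl a B) x.
Proof.
  intros H x. rewrite !TlR, H, (Pder_resp A B H).
  rewrite (Pder_resp (Pder A) (Pder B) (Pder_resp A B H)). reflexivity.
Qed.

Lemma Tl_scale a c P x : PeR (Tl a (Pscale c P)) x = Cmul c (PeR (Tl a P) x).
Proof.
  rewrite !TlR, !Pder_scale. unfold PeR; rewrite !Peval_scale.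
  generalize (Peval P (RtoC x)) (Peval (Pder P) (RtoC x)) (Peval (Pder (Pder P)) (RtoC x)).
  intros; cr.
Qed.

Lemma Tl_add a A B x : PeR (Tl a (Padd A B)) x = Cadd (PeR (Tl a A) x) (PeR (Tl a B) x).
Proof.
  rewrite !TlR.
  assert (E1 : forall t, PeR (Pder (Padd A B)) t = PeR (Padd (Pder A) (Pder B)) t).
  { intro t; unfold PeR; rewrite Pder_Padd, Peval_Padd; reflexivity. }
  rewrite (Pder_resp _ _ E1). unfold PeR. rewrite !Pder_Padd, !Peval_Padd.
  generalize (Peval A (RtoC x)) (Peval (Pder A) (RtoC x)) (Peval (Pder (Pder A)) (RtoC x))
    (Peval B (RtoC x)) (Peval (Pder B) (RtoC x)) (Peval (Pder (Pder B)) (RtoC x)).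
  intros; cr.
Qed.

Lemma Tl_x a P x : PeR (Tl a (Czero :: P)) x = Cmul (RtoC x) (PeR (Tl (Cadd a Cone) P) x).
Proof.
  rewrite Tl_cons. unfold PeR. rewrite Peval_Padd, !Peval_cons, Peval_nil.
  generalize (Peval (Tl (Cadd a Cone) P) (RtoC x)). intros; cr.
Qed.

Lemma part_ii a n : forall x,
  Cmul (Cmul (Cadd (Cmul (RtoC 2) a) Cone) (RtoC x)) (PeR (Pn (Cadd a Cone) n) x) =
  Cadd (Copp (PeR (Pn a (S n)) x)) (Cmul (Cmul a a) (PeR (Pn a n) x)).
Proof.
  induction n; intro x.
  - rewrite Pn_S. rewrite TlR. simpl Pn. unfold PeR. simpl Pder.
    rewrite ?Peval_cons, ?Peval_nil. cr.
  - set (X := Pscale (Cadd (Cmul (RtoC 2) a) Cone) (Czero :: Pn (Cadd a Cone) n)).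
    set (Y := Padd (Pscale (Copp Cone) (Pn a (S n))) (Pscale (Cmul a a) (Pn a n))).
    assert (HXY : forall t, PeR X t = PeR Y t).
    { intro t. unfold X, Y, PeR. rewrite Peval_Padd, !Peval_scale, Peval_cons.
      pose proof (IHn t) as H. unfold PeR in H.
      transitivity (Cmul (Cmul (Cadd (Cmul (RtoC 2) a) Cone) (RtoC t)) (Peval (Pn (Cadd a Cone) n) (RtoC t))); [cr|].
      rewrite H. cr. }
    pose proof (Tl_resp a X Y HXY x) as H.
    unfold X, Y in H. rewrite Tl_add, !Tl_scale, Tl_x in H.
    rewrite (Pn_S (Cadd a Cone) n), (Pn_S a (S n)), (Pn_S a n).
    rewrite (Pn_S a n) in H.
    transitivity (Cmul (Cadd (Cmul (RtoC 2) a) Cone) (Cmul (RtoC x) (PeR (Tl (Cadd a Cone) (Pn (Cadd a Cone) n)) x))); [cr|].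
    rewrite H. cr.
Qed.

Lemma cont_zero h : continuity_pt h 0 -> (forall x, 0 < x -> h x = 0) -> h 0 = 0.
Proof.
  intros Hc Hz. destruct (Req_dec (h 0) 0) as [E|E]; auto. exfalso.
  assert (Hp : 0 < Rabs (h 0)) by (apply Rabs_pos_lt; auto).
  destruct (Hc _ Hp) as [alp [Ha Hd]].
  assert (Hx : 0 < alp / 2) by lra.
  specialize (Hd (alp / 2)). simpl in Hd. unfold R_dist in Hd.
  rewrite Hz in Hd by auto.
  assert (Rabs (0 - h 0) < Rabs (h 0)).
  { apply Hd. split.
    - unfold D_x, no_cond. split; auto. lra.
    - rewrite Rminus_0_r, Rabs_right; lra. }
  rewrite Rminus_0_l, Rabs_Ropp in H. lra.
Qed.

Lemma agree0 P Q : (forall x, 0 < x -> PeR P x = PeR Q x) -> Peval P Czero = Peval Q Czero.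
Proof.
  intro H. destruct (CD_peval P 0) as [P1 P2]. destruct (CD_peval Q 0) as [Q1 Q2].
  apply Ceq.
  - assert (C : continuity_pt (fun t => fst (PeR P t) - fst (PeR Q t)) 0).
    { apply continuity_pt_minus; apply derivable_continuous_pt; eexists; eauto. }
    pose proof (cont_zero _ C) as Z. simpl in Z.
    unfold PeR in Z. unfold Czero, RtoC. apply Rminus_diag_uniq, Z.
    intros x Hx. pose proof (H x Hx) as Hq. unfold PeR in Hq. rewrite Hq. ring.
  - assert (C : continuity_pt (fun t => snd (PeR P t) - snd (PeR Q t)) 0).
    { apply continuity_pt_minus; apply derivable_continuous_pt; eexists; eauto. }
    pose proof (cont_zero _ C) as Z. simpl in Z.
    unfold PeR in Z. unfold Czero, RtoC. apply Rminus_diag_uniq, Z.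
    intros x Hx. pose proof (H x Hx) as Hq. unfold PeR in Hq. rewrite Hq. ring.
Qed.

Theorem lemma2p1 (alpha : Cplx) (Halpha : fst alpha > - (1 / 2)) :
  forall n : nat,
    (* p_n(.;alpha) is a polynomial of exact degree n on x > 0 *)
    (exists P : list Cplx, Pdeg_exact P n /\
        forall x : R, 0 < x -> pn n alpha x = Peval P (RtoC x))
    (* (i) *)
    /\ (forall x : R, 0 < x ->
          pn (S n) alpha x =
          Csub (Csub
            (Cmul (RtoC (x ^ 2)) (Cderiv (Cderiv (pn n alpha)) x))
            (Cmul (Cmul (RtoC x)
                     (Csub (RtoC (2 * x - 1)) (Cmul (RtoC 2) alpha)))
                  (Cderiv (pn n alpha) x)))
            (Cmul (Csub (Cmul (Cadd (Cmul (RtoC 2) alpha) Cone) (RtoC x))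
                        (Cpow alpha 2))
                  (pn n alpha x)))
    (* (ii) *)
    /\ (forall x : R, 0 < x ->
          Cmul (Cmul (Cadd (Cmul (RtoC 2) alpha) Cone) (RtoC x))
               (pn n (Cadd alpha Cone) x) =
          Cadd (Copp (pn (S n) alpha x)) (Cmul (Cpow alpha 2) (pn n alpha x)))
    (* (iii) value at 0 of the polynomial p_n *)
    /\ (forall P : list Cplx,
          (forall x : R, 0 < x -> pn n alpha x = Peval P (RtoC x)) ->
          Peval P Czero = Cpow alpha (2 * n))
    (* (iv) leading term *)
    /\ (exists a : list Cplx, (length a <= n)%nat /\
          forall x : R, 0 < x ->
            pn n alpha x =
            Cadd (Cmul (Cmul (Cpow (RtoC (-2)) n)
                             (poch (Cadd alpha (RtoC (1 / 2))) n))
                       (Cpow (RtoC x) n))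
                 (Peval a (RtoC x))).
Proof.
  intro n.
  assert (Hlen : length (Pn alpha n) = S n) by apply length_Pn.
  assert (Hne : Pn alpha n <> []) by (intro E; rewrite E in Hlen; discriminate).
  assert (Hlast : last (Pn alpha n) Czero <> Czero).
  { rewrite last_Pn. apply Cmul_neq0.
    - apply Cpow_neq0, fst_neq0; simpl; lra.
    - apply poch_neq0; simpl; lra. }
  split; [|split; [|split; [|split]]].
  - exists (Pn alpha n). split; [split; auto|]. intros; apply pn_eq; auto.
  - intros x Hx. rewrite pn_eq by auto. rewrite Pn_S, TlR.
    assert (E0 : forall y, 0 < y -> pn n alpha y = PeR (Pn alpha n) y) by (intros; apply pn_eq; auto).
    assert (E1 : forall y, 0 < y -> Cderiv (pn n alpha) y = PeR (Pder (Pn alpha n)) y).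
    { intros y Hy. rewrite (Cderiv_local _ _ y E0 Hy). apply Cderiv_peval. }
    rewrite (Cderiv_local _ _ x E1 Hx), Cderiv_peval, (E1 x Hx), (E0 x Hx).
    simpl Cpow.
    generalize (PeR (Pn alpha n) x) (PeR (Pder (Pn alpha n)) x) (PeR (Pder (Pder (Pn alpha n))) x).
    intros; cr.
  - intros x Hx. rewrite !pn_eq by auto. rewrite part_ii. simpl Cpow.
    generalize (PeR (Pn alpha (S n)) x) (PeR (Pn alpha n) x). intros; cr.
  - intros P' H. rewrite <- (agree0 (Pn alpha n) P').
    + apply Pn_zero.
    + intros x Hx. rewrite <- pn_eq by auto. apply H; auto.
  - exists (removelast (Pn alpha n)).
    pose proof (app_removelast_last Czero Hne) as Eapp.
    assert (Hl : length (removelast (Pn alpha n)) = n).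
    { apply (f_equal (@length _)) in Eapp. rewrite length_app in Eapp. simpl in Eapp. lia. }
    split; [lia|]. intros x Hx. rewrite pn_eq by auto. unfold PeR.
    rewrite Eapp at 1. rewrite Peval_app, Hl, last_Pn.
    generalize (Peval (removelast (Pn alpha n)) (RtoC x))
      (Cmul (Cpow (RtoC (-2)) n) (poch (Cadd alpha (RtoC (1 / 2))) n)) (Cpow (RtoC x) n).
    intros; cr.
Qed.
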